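(* Let $f:\mathbb{R}^\ell\times\mathbb{R}^m\to\mathbb{R}^\ell$ be $C^1$, let $\Lambda$ be a parameter shift with limits $\lambda_\pm$, and let $X$ define a stable path with endpoints $X_\pm$. For every sufficiently small $\epsilon>0$ there exists $S>0$ such that if $r>0$ and $N>0$ satisfy $rN>S$, then there is a unique solution $\{x_n\}$ of $x_{n+1}=f(x_n,\Lambda(rn))$ that stays within an $\epsilon$-neighborhood of $X_-$ for all $n\le -N$.
   Context: A parameter shift is a $C^1$ function $\Lambda:\mathbb{R}\to\mathbb{R}^m$ with $\lim_{s\to\pm\infty}\Lambda(s)=\lambda_\pm$ and $\lim_{s\to\pm\infty}\Lambda'(s)=0$. A stable path is given by $X:\mathbb{R}\to\mathbb{R}^\ell$ such that: $X(s)$ is a fixed point of $f(\cdot,\Lambda(s))$ for every $s$; $\{(s,X(s))\}$ is a connected curve; the limits $X_\pm=\lim_{s\to\pm\infty}X(s)$ exist and are fixed points of $f(\cdot,\lambda_\pm)$; and the spectral radius of $D_xf(X(s),\Lambda(s))$ is $<1$ for all $s\in\mathbb{R}\cup\{\pm\infty\}$ (with $X(\pm\infty)=X_\pm$, $\Lambda(\pm\infty)=\lambda_\pm$). A solution is a sequence $\{x_n\}$ satisfying $x_{n+1}=f(x_n,\Lambda(rn))$; $f(\cdot,\lambda)$ need not be invertible. *)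

(* Defs.v *)
From HB Require Import structures.
From mathcomp Require Import all_boot all_order all_algebra.
From mathcomp Require Import complex.
From mathcomp Require Import all_classical all_reals all_analysis.
Set Implicit Arguments. Unset Strict Implicit. Unset Printing Implicit Defensive.
Import Order.TTheory GRing.Theory Num.Theory.
Import numFieldNormedType.Exports.
Local Open Scope ring_scope.
Local Open Scope classical_set_scope.

Definition enorm (R : realType) (n : nat) (v : 'rV[R]_n) : R :=
  Num.sqrt (\sum_(i < n) v ord0 i ^+ 2).

Definition C1_prod (R : realType) (l m : nat)
  (f : 'rV[R]_l * 'rV[R]_m -> 'rV[R]_l) : Prop :=
  (forall p, differentiable f p) /\
  (forall v, continuous (fun p => 'd f p v)).

Definition C1_curve (R : realType) (m : nat) (g : R -> 'rV[R]_m) : Prop :=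
  (forall s, derivable g s 1) /\ continuous g^`().

Definition parameter_shift (R : realType) (m : nat) (Lam : R -> 'rV[R]_m)
  (lam_m lam_p : 'rV[R]_m) : Prop :=
  [/\ C1_curve Lam,
      Lam s @[s --> -oo] --> lam_m,
      Lam s @[s --> +oo] --> lam_p,
      Lam^`() s @[s --> -oo] --> (0 : 'rV[R]_m) &
      Lam^`() s @[s --> +oo] --> (0 : 'rV[R]_m)].

(* Jacobian D_x f (x, lam): entry (i, j) is the partial derivative of f_i wrt x_j *)
Definition Dxf (R : realType) (l m : nat)
  (f : 'rV[R]_l * 'rV[R]_m -> 'rV[R]_l) (x : 'rV[R]_l) (lam : 'rV[R]_m)
  : 'M[R]_l :=
  \matrix_(i < l, j < l) ('d f (x, lam) (delta_mx ord0 j, 0)) ord0 i.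

Definition spectral_radius_lt1 (R : realType) (n : nat) (A : 'M[R]_n) : Prop :=
  forall z : R[i], eigenvalue (map_mx (fun x : R => (x%:C)%C) A) z -> `|z| < 1.

Definition stable_path (R : realType) (l m : nat)
  (f : 'rV[R]_l * 'rV[R]_m -> 'rV[R]_l) (Lam : R -> 'rV[R]_m)
  (lam_m lam_p : 'rV[R]_m) (X : R -> 'rV[R]_l) (Xm Xp : 'rV[R]_l) : Prop :=
  (forall s, f (X s, Lam s) = X s) /\
  connected [set p : R * 'rV[R]_l | p.2 = X p.1] /\
  (X s @[s --> -oo] --> Xm) /\
  (X s @[s --> +oo] --> Xp) /\
  f (Xm, lam_m) = Xm /\
  f (Xp, lam_p) = Xp /\
  (forall s, spectral_radius_lt1 (Dxf f (X s) (Lam s))) /\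
  spectral_radius_lt1 (Dxf f Xm lam_m) /\
  spectral_radius_lt1 (Dxf f Xp lam_p).

Definition is_solution (R : realType) (l m : nat)
  (f : 'rV[R]_l * 'rV[R]_m -> 'rV[R]_l) (Lam : R -> 'rV[R]_m) (r : R)
  (x : int -> 'rV[R]_l) : Prop :=
  forall n : int, x (n + 1)%R = f (x n, Lam (r * n%:~R)).

(* Main.v *)
Require Import Defs.
From HB Require Import structures.
From mathcomp Require Import all_boot all_order all_algebra.
From mathcomp Require Import complex.
From mathcomp Require Import all_classical all_reals all_analysis.
From mathcomp Require Import ring lra zify.
Import Order.TTheory GRing.Theory Num.Theory.
Import numFieldNormedType.Exports.
Local Open Scope ring_scope.
Set Implicit Arguments. Unset Strict Implicit. Unset Printing Implicit Defensive.

Section NC.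
Variable R : realType.
Local Notation C := R[i].

Definition nc (z : C) : R := complex.Re `|z|.

Lemma ncE z : `|z| = (nc z)%:C%C.
Proof. rewrite /nc normc_def. set s := Num.ExtraDef.sqrtr _. exact: erefl. Qed.

Lemma nc_ge0 z : 0 <= nc z.
Proof. by have := normr_ge0 z; rewrite lecE => /andP[]. Qed.

Lemma ncD a b : nc (a + b) <= nc a + nc b.
Proof. by have := ler_normD a b; rewrite !ncE -rmorphD lecE => /andP[]. Qed.

Lemma ncM a b : nc (a * b) = nc a * nc b.
Proof. by apply: (@complexI R); rewrite rmorphM /= -!ncE normrM. Qed.

Lemma ncN a : nc (- a) = nc a.
Proof. by apply: (@complexI R); rewrite -!ncE normrN. Qed.

Lemma ncR (x : R) : nc (x%:C%C) = `|x|.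
Proof. by rewrite /nc normc_def /= expr0n addr0 sqrtr_sqr. Qed.

Lemma nc_sum (I : Type) (r : seq I) (P : pred I) (F : I -> C) :
  nc (\sum_(i <- r | P i) F i) <= \sum_(i <- r | P i) nc (F i).
Proof.
have h := ler_norm_sum r (F : _ -> C) P.
have e : \sum_(i <- r | P i) `|F i| = (\sum_(i <- r | P i) nc (F i))%:C%C.
  by rewrite rmorph_sum; apply: eq_bigr => i _; rewrite ncE.
by move: h; rewrite e ncE lecE => /andP[].
Qed.

Lemma nc_lt1 z : `|z| < 1 -> nc z < 1.
Proof. by rewrite ncE ltcE => /andP[]. Qed.

Lemma nc_eq0 z : nc z = 0 -> z = 0.
Proof. by move=> h; apply/normr0_eq0; rewrite ncE h. Qed.
End NC.

Section Adapted.
Variable R : realType.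
Local Notation C := R[i].
Local Notation toC := (fun x : R => (x%:C)%C).

Lemma nc0 : nc (0 : C) = 0.
Proof. by have := ncR (0 : R); rewrite normr0. Qed.

Lemma term_le_sum (I : finType) (F : I -> R) j :
  (forall i, 0 <= F i) -> F j <= \sum_i F i.
Proof. by move=> h; rewrite (bigD1 j) //= ler_wpDr // sumr_ge0. Qed.

Lemma entry_le_norm m n (M : 'M[R]_(m, n)) i j : `|M i j| <= `|M|.
Proof.
rewrite [X in _ <= X]/Num.Def.normr /= mx_normrE.
exact: (le_bigmax _ (fun ij : 'I_m * 'I_n => `|M ij.1 ij.2|) (i, j)).
Qed.

Lemma norm_le_entries m n (M : 'M[R]_(m, n)) c :
  0 <= c -> (forall i j, `|M i j| <= c) -> `|M| <= c.
Proof.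
move=> c0 h; rewrite [X in X <= _]/Num.Def.normr /= mx_normrE.
by apply: bigmax_le => // -[i j] _; exact: h.
Qed.

Lemma trig_similar l (A : 'M[R]_l) :
  exists2 P : 'M[C]_l, P \in unitmx &
    is_trig_mx (P *m map_mx toC A *m invmx P).
Proof.
case: l A => [|l] A.
  exists 1%:M; first exact: unitmx1.
  by apply/is_trig_mxP => -[].
have [P Pu H] := @Schur C l.+1 (map_mx toC A) isT.
exists P; first exact: unitarymx_unit.
by move: H; rewrite /similar_to conjumx // unitarymx_unit.
Qed.

Lemma trig_diag_eig l (A : 'M[C]_l) (P : 'M[C]_l) : P \in unitmx ->
  is_trig_mx (P *m A *m invmx P) ->
  forall i, eigenvalue A ((P *m A *m invmx P) i i).
Proof.
move=> Pu Tt i; set T := P *m A *m invmx P.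
have TP : T *m P = P *m A by rewrite /T mulmxKV.
have : eigenvalue T (T i i).
  rewrite eigenvalue_root_char char_poly_trig //.
  apply/rootP; rewrite horner_prod; apply/eqP/prodf_eq0; exists i => //.
  by rewrite hornerXsubC subrr.
move/eigenvalueP => [v vT vn0]; apply/eigenvalueP; exists (v *m P).
  by rewrite -mulmxA -TP mulmxA vT scalemxAl.
apply: contraNneq vn0 => h.
by rewrite -(mulmxK Pu v) h mul0mx.
Qed.


Lemma adapted_norm l (A : 'M[R]_l) : spectral_radius_lt1 A ->
  exists (nu : 'rV[R]_l -> R) (k c2 K : R),
  [/\ 0 <= k, k < 1, 0 < c2 & 0 < K] /\
  (forall v, 0 <= nu v) /\ (forall u w, nu (u + w) <= nu u + nu w) /\
  (forall v, nu (- v) = nu v) /\ (forall v, nu v <= c2 * `|v|) /\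
  (forall v, `|v| <= K * nu v) /\ (forall v, nu (v *m A^T) <= k * nu v).
Proof.
move=> hA.
have [P Pu Tt] := trig_similar A.
set Ac := map_mx (fun x : R => (x%:C)%C) A; set T := P *m Ac *m invmx P.
have diag i : nc (T i i) < 1 by apply/nc_lt1/hA/trig_diag_eig.
set rho := \big[Num.max/0]_i nc (T i i).
have rho_lt1 : rho < 1 by apply: bigmax_lt => // i _; exact: diag.
have rho_ge0 : 0 <= rho by exact: bigmax_ge_id.
have Tii_le i : nc (T i i) <= rho by exact: le_bigmax.
set Mt := \sum_i \sum_j nc (T i j).
have Mt_ge0 : 0 <= Mt by apply: sumr_ge0 => i _; apply: sumr_ge0 => j _; exact: nc_ge0.
set d := Num.min 1 ((1 - rho) / (2 * (Mt + 1))).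
have Mt1 : 0 < Mt + 1 by rewrite ltr_wpDl.
have d_gt0 : 0 < d.
  by rewrite lt_min ltr01 /= divr_gt0 // ?subr_gt0 // mulr_gt0.
have d_le1 : d <= 1 by rewrite ge_min lexx.
have dM : d * Mt <= (1 - rho) / 2.
  have h1 : d <= (1 - rho) / (2 * (Mt + 1)) by rewrite ge_min lexx orbT.
  apply: (le_trans (ler_wpM2r Mt_ge0 h1)).
  have e : (1 - rho) / (2 * (Mt + 1)) * Mt = (1 - rho) / 2 * (Mt / (Mt + 1)).
    by rewrite invfM !mulrA mulrAC.
  rewrite e ler_piMr ?divr_ge0 ?subr_ge0 ?ltW //.
  by rewrite ltr_pdivrMr // mul1r ltrDl.
set k := rho + d * Mt.
have k_ge0 : 0 <= k by rewrite addr_ge0 // mulr_ge0 // ltW.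
have k_lt1 : k < 1 by rewrite /k; lra.
set y := fun v : 'rV[R]_l => P *m (map_mx (fun x : R => (x%:C)%C) v)^T.
set nu := fun v : 'rV[R]_l => \sum_(i < l) d ^+ i * nc (y v i ord0).
have yD (u w : 'rV[R]_l) : y (u + w) = y u + y w by rewrite /y map_mxD raddfD /= mulmxDr.
have yN (u : 'rV[R]_l) : y (- u) = - y u by rewrite /y map_mxN raddfN /= mulmxN.
have yE (v : 'rV[R]_l) i : y v i ord0 = \sum_j P i j * toC (v ord0 j).
  by rewrite /y !mxE; apply: eq_bigr => j _; rewrite !mxE.
have dX_ge0 i : 0 <= d ^+ i by rewrite exprn_ge0 // ltW.
have nu_ge0 (v : 'rV[R]_l) : 0 <= nu v.
  by apply: sumr_ge0 => i _; rewrite mulr_ge0 // nc_ge0.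
have nuD (u w : 'rV[R]_l) : nu (u + w) <= nu u + nu w.
  rewrite /nu -big_split /=; apply: ler_sum => i _.
  by rewrite yD mxE -mulrDr ler_wpM2l // ncD.
have nuN (v : 'rV[R]_l) : nu (- v) = nu v.
  by rewrite /nu; apply: eq_bigr => i _; rewrite yN mxE ncN.
set c2 := \sum_i \sum_j nc (P i j) + 1.
have c2_gt0 : 0 < c2.
  by rewrite ltr_wpDl // sumr_ge0 // => i _; rewrite sumr_ge0 // => j _; rewrite nc_ge0.
have ny (v : 'rV[R]_l) i : nc (y v i ord0) <= (\sum_j nc (P i j)) * `|v|.
  rewrite yE (le_trans (nc_sum _ _ _)) // mulr_suml; apply: ler_sum => j _.
  by rewrite ncM ncR ler_wpM2l ?nc_ge0 // entry_le_norm.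
have nu_le (v : 'rV[R]_l) : nu v <= c2 * `|v|.
  apply: (@le_trans _ _ (\sum_i (\sum_j nc (P i j)) * `|v|)).
    apply: ler_sum => i _; apply: le_trans (ny v i).
    by rewrite ler_piMl ?nc_ge0 // exprn_ile1 // ltW.
  by rewrite -mulr_suml ler_wpM2r // lerDl.
set Q := invmx P.
set Qt := \sum_j \sum_i nc (Q j i) + 1.
have Qt_gt0 : 0 < Qt.
  by rewrite ltr_wpDl // sumr_ge0 // => i _; rewrite sumr_ge0 // => j _; rewrite nc_ge0.
set K := Qt / d ^+ l.
have K_gt0 : 0 < K by rewrite divr_gt0 // exprn_gt0.
have nyl (v : 'rV[R]_l) i : nc (y v i ord0) <= nu v / d ^+ l.
  rewrite ler_pdivlMr ?exprn_gt0 // mulrC.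
  have h := @term_le_sum _ (fun i : 'I_l => d ^+ i * nc (y v i ord0)) i.
  apply: le_trans (h _); last by move=> j; rewrite mulr_ge0 // nc_ge0.
  by rewrite ler_wpM2r ?nc_ge0 // ler_wiXn2l // ?ltW // ltnW.
have vQ (v : 'rV[R]_l) : (map_mx (fun x : R => (x%:C)%C) v)^T = Q *m y v by rewrite /y mulKmx.
have le_K (v : 'rV[R]_l) : `|v| <= K * nu v.
  apply: norm_le_entries; first by rewrite mulr_ge0 // ltW.
  move=> i j; rewrite (ord1 i) -ncR.
  have -> : toC (v ord0 j) = ((map_mx toC v)^T) j ord0 by rewrite !mxE.
  rewrite vQ mxE (le_trans (nc_sum _ _ _)) //.
  apply: (@le_trans _ _ (\sum_i0 nc (Q j i0) * (nu v / d ^+ l))).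
    by apply: ler_sum => i0 _; rewrite ncM ler_wpM2l ?nc_ge0.
  have -> : K * nu v = Qt * (nu v / d ^+ l) by rewrite /K; ring.
  rewrite -mulr_suml; apply: ler_wpM2r; first by rewrite divr_ge0 // ltW.
  rewrite /Qt ler_wpDr //; apply: (@term_le_sum _ (fun j => \sum_i nc (Q j i))) => j0.
  by rewrite sumr_ge0 // => i0 _; rewrite nc_ge0.
have yA (v : 'rV[R]_l) : y (v *m A^T) = T *m y v.
  rewrite /y map_mxM trmx_mul -[map_mx _ A^T]map_trmx trmxK /T -!mulmxA mulKmx //.
have col (j : 'I_l) : \sum_(i < l) d ^+ i * nc (T i j) <= d ^+ j * k.
  rewrite (bigD1 j) //= /k mulrDr.
  apply: lerD; first by apply: ler_wpM2l => //; exact: Tii_le.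
  apply: (@le_trans _ _ (\sum_(i < l | i != j) d ^+ j * d * nc (T i j))).
    apply: ler_sum => i ij.
    case: (ltngtP i j) => [lt|gt|eq].
    - have -> : T i j = 0 by move/is_trig_mxP: Tt; apply.
      by rewrite nc0 mulr0 mulr_ge0 // mulr_ge0 // ltW.
    - by apply: ler_wpM2r; [exact: nc_ge0 | rewrite -exprSr ler_wiXn2l // ltW].
    - by move/val_inj: eq ij => ->; rewrite eqxx.
  rewrite -mulr_sumr -mulrA; apply: ler_wpM2l => //.
  apply: ler_wpM2l; first exact: ltW.
  apply: (@le_trans _ _ (\sum_(i < l) nc (T i j))).
    by rewrite [X in _ <= X](bigD1 j) //= lerDr nc_ge0.
  apply: ler_sum => i _; apply: (@term_le_sum _ (fun j' => nc (T i j'))) => j'.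
  exact: nc_ge0.
exists nu, k, c2, K; do !split => //.
move=> v; rewrite /nu yA.
apply: (@le_trans _ _ (\sum_(i < l) \sum_(j0 < l) d ^+ i * nc (T i j0) * nc (y v j0 ord0))).
  apply: ler_sum => i _.
  under eq_bigr do rewrite -mulrA.
  rewrite -mulr_sumr; apply: ler_wpM2l => //.
  rewrite mxE (le_trans (nc_sum _ _ _)) //; apply: ler_sum => j0 _.
  by rewrite ncM.
rewrite exchange_big /= mulr_sumr; apply: ler_sum => j _.
rewrite -mulr_suml mulrA [k * _]mulrC; apply: ler_wpM2r; first exact: nc_ge0.
exact: col.
Qed.

End Adapted.

Local Open Scope classical_set_scope.

Section D.
Variable R : realType.
Variables l m : nat.
Local Notation V := ('rV[R]_l * 'rV[R]_m)%type.

Lemma ball_pair (x0 x : 'rV[R]_l) (l0 lam : 'rV[R]_m) e :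
  ball (x0, l0) e (x, lam) -> `|x0 - x| < e /\ `|l0 - lam| < e.
Proof. by case; rewrite -!ball_normE. Qed.

Lemma pair_sum (I : finType) (F : I -> 'rV[R]_l) :
  ((\sum_i F i, 0) : V) = \sum_i ((F i, 0) : V).
Proof.
apply: (big_morph (fun u : 'rV[R]_l => ((u, 0) : V))) => //.
by move=> a b; rewrite -[RHS]/(a + b, 0 + 0) addr0.
Qed.

Lemma lin_decomp (W : normedModType R) (L : {linear V -> W}) (v : 'rV[R]_l) :
  L (v, 0) = \sum_j v ord0 j *: L ('e_j, 0).
Proof.
rewrite {1}(row_sum_delta v) pair_sum linear_sum; apply: eq_bigr => j _.
rewrite -linearZ; congr (L _).
by rewrite -[RHS]/(v ord0 j *: ('e_j : 'rV[R]_l), v ord0 j *: (0 : 'rV[R]_m)) scaler0.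
Qed.


Lemma line_fun (W : normedModType R) (f : V -> W) (a w : V) (t : R) :
  (fun h : R => h^-1 *: (((fun s : R => f (s *: w + a)) \o shift t) (h *: 1)
       - (fun s : R => f (s *: w + a)) t)) =
  (fun h : R => h^-1 *: ((f \o shift (t *: w + a)) (h *: w) - f (t *: w + a))).
Proof.
apply: funext => h /=.
by rewrite -[h *: 1]/(h * 1) mulr1 scalerDl addrA.
Qed.

Lemma derivable_line (W : normedModType R) (f : V -> W) (a w : V) (t : R) :
  derivable f (t *: w + a) w -> derivable (fun s : R => f (s *: w + a)) t 1.
Proof. by rewrite /derivable line_fun. Qed.

Lemma derive_line (W : normedModType R) (f : V -> W) (a w : V) (t : R) :
  'D_1 (fun s : R => f (s *: w + a)) t = 'D_w f (t *: w + a).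
Proof. by rewrite /derive line_fun. Qed.


Lemma mvt_comp (f : V -> 'rV[R]_l) (a w b : V) (i : 'I_l) :
  (forall p, differentiable f p) -> w + a = b ->
  exists2 c : R, 0 <= c <= 1 &
    (f b - f a) ord0 i = ('d f (c *: w + a) w) ord0 i.
Proof.
move=> df <-.
pose F := fun s : R => f (s *: w + a).
pose phi := fun s : R => F s ord0 i.
have dF s : derivable F s 1 by apply: derivable_line; exact: diff_derivable.
have dphi s : derivable phi s 1 by exact: ((derivable_mxP F s 1).1 (dF s) ord0 i).
have Dphi s : 'D_1 phi s = ('d f (s *: w + a) w) ord0 i.
  have := derive_mx (dF s); move/(congr1 (fun M : 'rV[R]_l => M ord0 i)); rewrite mxE => <-.
  by rewrite /F derive_line deriveE.
have cphi : {within `[0, 1], continuous phi}.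
  apply: continuous_subspaceT => x; apply: differentiable_continuous.
  by apply/derivable1_diffP; exact: dphi.
have [c c01 h] := MVT_segment ler01 (fun x _ => derivableP (dphi x)) cphi.
exists c; first by move: c01; rewrite in_itv.
move: h; rewrite subr0 mulr1 Dphi /phi /F scale1r scale0r add0r => <-.
by rewrite !mxE.
Qed.


Lemma dxf_lin (f : V -> 'rV[R]_l) x0 lam0 (v : 'rV[R]_l) :
  v *m (Dxf f x0 lam0)^T = 'd f (x0, lam0) (v, 0).
Proof.
rewrite lin_decomp; apply/rowP => i; rewrite !mxE summxE.
by apply: eq_bigr => j _; rewrite !mxE.
Qed.

Lemma op_bound (L1 L2 : {linear V -> 'rV[R]_l}) (c : R) (v : 'rV[R]_l) :
  (forall j, `|L1 ('e_j, 0) - L2 ('e_j, 0)| <= c) ->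
  `|L1 (v, 0) - L2 (v, 0)| <= `|v| * c *+ l.
Proof.
move=> h; rewrite (lin_decomp L1) (lin_decomp L2) -sumrB.
apply: (le_trans (ler_norm_sum _ _ _)).
apply: (@le_trans _ _ (\sum_(j < l) `|v| * c)); last by rewrite sumr_const card_ord.
apply: ler_sum => j _; rewrite -scalerBr normrZ.
by apply: ler_pM; rewrite ?normr_ge0 //; exact: entry_le_norm.
Qed.

Lemma op_est (f : V -> 'rV[R]_l) (p0 : V) : C1_prod f ->
  forall eta, 0 < eta -> \forall p \near p0,
    forall v : 'rV[R]_l, `|'d f p (v, 0) - 'd f p0 (v, 0)| <= eta * `|v|.
Proof.
move=> hC eta eta0.
have e0 : 0 < eta / (l.+1)%:R by rewrite divr_gt0 // ltr0n.
have h (j : 'I_l) : \forall p \near p0,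
    `|'d f p0 ('e_j, 0) - 'd f p ('e_j, 0)| < eta / (l.+1)%:R.
  by have := hC.2 ('e_j, 0) p0; move/cvgrPdist_lt; apply.
near=> p.
have hp : forall j : 'I_l, `|'d f p ('e_j, 0) - 'd f p0 ('e_j, 0)| <= eta / (l.+1)%:R.
  move=> j; rewrite distrC; apply: ltW; move: j.
  by near: p; exact: filter_forall _ h.
move=> v.
apply: (le_trans (op_bound v hp)).
rewrite -mulr_natr -mulrA mulrC; apply: ler_wpM2r; first exact: normr_ge0.
rewrite mulrC mulrA ler_pdivrMr ?ltr0n // mulrC; apply: ler_wpM2l; first exact: ltW.
by rewrite ler_nat.
Unshelve. all: by end_near.
Qed.

Lemma diff_est (f : V -> 'rV[R]_l) x0 lam0 : C1_prod f ->
  forall eta, 0 < eta -> exists2 rho, 0 < rho &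
  forall x y lam, `|x - x0| < rho -> `|y - x0| < rho -> `|lam - lam0| < rho ->
  `|f (x, lam) - f (y, lam) - (x - y) *m (Dxf f x0 lam0)^T| <= eta * `|x - y|.
Proof.
move=> hC eta eta0.
have /nbhs_ballP [rho rho0 hb] := op_est (x0, lam0) hC eta0.
exists rho => // x y lam hx hy hl.
apply: norm_le_entries; first by rewrite mulr_ge0 // ltW.
move=> i j; rewrite (ord1 i).
pose w : V := (x - y, 0); pose a : V := (y, lam).
have wa : w + a = (x, lam) by rewrite -[w + a]/(x - y + y, 0 + lam) subrK add0r.
have [c /andP[c0 c1] hc] := mvt_comp j hC.1 wa.
have key : forall (F1 F2 G H : 'rV[R]_l), (F1 - F2) ord0 j = G ord0 j ->
    `|G - H| <= eta * `|x - y| -> `|(F1 - F2 - H) ord0 j| <= eta * `|x - y|.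
  move=> F1 F2 G H e hG.
  have -> : (F1 - F2 - H) ord0 j = (G - H) ord0 j by rewrite !mxE -e !mxE.
  exact: le_trans (entry_le_norm _ _ _) hG.
rewrite dxf_lin; apply: (key _ _ _ _ hc).
have bc : ball (x0, lam0) rho (c *: w + a).
  rewrite -[c *: w + a]/(c *: (x - y) + y, c *: 0 + lam) scaler0 add0r.
  split; rewrite -ball_normE /=; last by rewrite distrC.
  have -> : x0 - (c *: (x - y) + y) = c *: (x0 - x) + (1 - c) *: (x0 - y).
    by apply/rowP => k; rewrite !mxE; ring.
  apply: (le_lt_trans (ler_normD _ _)); rewrite !normrZ.
  rewrite (ger0_norm c0) ger0_norm ?subr_ge0 //.
  have hx' : `|x0 - x| < rho by rewrite distrC.
  have hy' : `|x0 - y| < rho by rewrite distrC.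
  set M := Num.max `|x0 - x| `|x0 - y|.
  have M_lt : M < rho by rewrite gt_max hx' hy'.
  apply: le_lt_trans M_lt.
  apply: (@le_trans _ _ (c * M + (1 - c) * M)); last by rewrite -mulrDl subrKC mul1r.
  apply: lerD; apply: ler_wpM2l; rewrite ?subr_ge0 // ?le_max ?lexx ?orbT //.
exact: (hb _ bc (x - y)).
Qed.

End D.

Section F.
Variable R : realType.

Lemma geom_small (q C e : R) : 0 <= q < 1 -> 0 < e ->
  exists N : nat, forall n, (N <= n)%N -> C * q ^+ n < e.
Proof.
move=> /andP[q0 q1] e0.
have hq : `|q| < 1 by rewrite ger0_norm.
have e1 : 0 < e / (`|C| + 1) by rewrite divr_gt0 // ltr_wpDl.
have := cvg_expr hq; move/cvgrPdist_lt => /(_ _ e1) [N _ hN].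
exists N => n Nn.
have := hN n Nn; rewrite /= sub0r normrN ger0_norm ?exprn_ge0 // => hqn.
apply: (le_lt_trans (ler_norm _)); rewrite normrM (ger0_norm (exprn_ge0 _ q0)).
apply: (le_lt_trans (_ : _ <= (`|C| + 1) * q ^+ n)).
  by apply: ler_wpM2r; rewrite ?exprn_ge0 // lerDl.
by rewrite mulrC -ltr_pdivlMr // ltr_wpDl.
Qed.

Lemma cvg_of_geom l (u : nat -> 'rV[R]_l) (C q : R) : 0 <= q < 1 ->
  (forall K n, (K <= n)%N -> `|u K - u n| <= C * q ^+ K) -> cvgn u.
Proof.
move=> hq hu; apply: cauchy_cvg; apply: cauchy_exP => e e0.
have [N hN] := geom_small C hq e0.
exists (u N); exists N => // n /= Nn.
by rewrite -ball_normE /=; apply: le_lt_trans (hu _ _ Nn) (hN _ (leqnn N)).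
Qed.


Section Pull.
Variable l : nat.
Local Notation E := 'rV[R]_l.
Variables (g : int -> E -> E) (nu : E -> R) (c : E) (n0 : int).
Variables (q Kc c2 d R0 : R).
Hypothesis hq : 0 <= q < 1.
Hypothesis hK : 0 < Kc.
Hypothesis hc2 : 0 < c2.
Hypothesis nuK : forall v, `|v| <= Kc * nu v.
Hypothesis nuc2 : forall v, nu v <= c2 * `|v|.
Hypothesis nuD : forall u w, nu (u + w) <= nu u + nu w.
Hypothesis nuN : forall v, nu (- v) = nu v.
Hypothesis hd : 0 <= d.
Hypothesis dR : d <= R0.
Hypothesis contr : forall n, n <= n0 -> forall x y, nu (x - c) <= R0 ->
  nu (y - c) <= R0 -> nu (g n x - g n y) <= q * nu (x - y).
Hypothesis inv : forall n, n <= n0 -> forall x, nu (x - c) <= d ->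
  nu (g n x - c) <= d.
Hypothesis gc : forall n, continuous (g n).

Lemma nu0 : nu 0 = 0.
Proof.
apply/eqP; rewrite eq_le; apply/andP; split.
  by apply: le_trans (nuc2 0) _; rewrite normr0 mulr0.
by have := nuD 0 0; rewrite addr0 lerDr.
Qed.

Lemma nu_ge0 v : 0 <= nu v.
Proof.
have := nuD v (- v); rewrite subrr nu0 nuN.
by rewrite -mulr2n -mulr_natl pmulr_rge0 // ltr0n.
Qed.

Lemma nu_sym u v : nu (u - v) = nu (v - u).
Proof. by rewrite -nuN opprB. Qed.

Lemma nu_tri u v w : nu (u - w) <= nu (u - v) + nu (v - w).
Proof. by have := nuD (u - v) (v - w); rewrite addrA subrK. Qed.

Fixpoint phi (m : int) (k : nat) (x : E) : E :=
  if k is k'.+1 then g (m + k'%:Z) (phi m k' x) else x.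

Lemma phi_add m a b x : phi m (a + b) x = phi (m + a%:Z) b (phi m a x).
Proof.
elim: b => [|b IH] /=; first by rewrite addn0.
by rewrite addnS /= IH -addrA -PoszD.
Qed.

Lemma phi_inv m k x : m + k%:Z <= n0 + 1 -> nu (x - c) <= d ->
  nu (phi m k x - c) <= d.
Proof.
elim: k => [|k IH] //= h hx; apply: inv; first by lia.
by apply: IH => //; lia.
Qed.

Lemma phi_contr m k x y : m + k%:Z <= n0 + 1 -> nu (x - c) <= d ->
  nu (y - c) <= d -> nu (phi m k x - phi m k y) <= q ^+ k * nu (x - y).
Proof.
move=> + hx hy; elim: k => [|k IH] /= h; first by rewrite expr0 mul1r.
apply: le_trans (contr _ _ _) _; first by lia.
- by apply: le_trans dR; apply: phi_inv => //; lia.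
- by apply: le_trans dR; apply: phi_inv => //; lia.
rewrite exprS -mulrA; apply: ler_wpM2l; first by case/andP: hq.
by apply: IH; lia.
Qed.

Definition sq (n : int) (K : nat) : E := phi (n - K%:Z) K c.

Lemma sq_inv n K : n <= n0 + 1 -> nu (sq n K - c) <= d.
Proof. by move=> h; apply: phi_inv; [lia | rewrite subrr nu0]. Qed.

Lemma sq_cauchy n : n <= n0 + 1 -> forall K N, (K <= N)%N ->
  `|sq n K - sq n N| <= (Kc * d) * q ^+ K.
Proof.
move=> hn K N KN.
have e : sq n N = phi (n - K%:Z) K (phi (n - N%:Z) (N - K) c).
  have -> : n - K%:Z = (n - N%:Z) + (N - K)%N%:Z by lia.
  by rewrite /sq -phi_add subnK.
rewrite e /sq; apply: (le_trans (nuK _)).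
rewrite mulrAC -mulrA; apply: ler_wpM2l; first exact: ltW.
apply: (le_trans (@phi_contr (n - K%:Z) K c (phi (n - N%:Z) (N - K) c) _ _ _)); first by lia.
- by rewrite subrr nu0.
- by apply: phi_inv; [lia | rewrite subrr nu0].
apply: ler_wpM2l; first by rewrite exprn_ge0 //; case/andP: hq.
by rewrite nu_sym; apply: phi_inv; [lia | rewrite subrr nu0].
Qed.

Lemma sq_shift n K : sq (n + 1) K.+1 = g n (sq n K).
Proof.
rewrite /sq /=; have -> : n + 1 - K.+1%:Z = n - K%:Z by lia.
by congr g; lia.
Qed.

Lemma sq_cvg n : cvgn (sq n).
Proof.
have [hn|hn] := lerP n (n0 + 1).
  apply: (@cvg_of_geom l _ (Kc * d) q hq) => K N KN.
  exact: sq_cauchy.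
have [k ->] : exists k : nat, n = n0 + 1 + k%:Z.
  by exists (absz (n - (n0 + 1))%R); rewrite gez0_abs; [ring | lia].
elim: k => [|k IH].
  rewrite addr0; apply: (@cvg_of_geom l _ (Kc * d) q hq) => K N KN.
  by apply: sq_cauchy; lia.
have -> : n0 + 1 + k.+1%:Z = (n0 + 1 + k%:Z) + 1 by lia.
apply/cvg_ex; exists (g (n0 + 1 + k%:Z) (lim (sq (n0 + 1 + k%:Z) @ \oo))).
rewrite -cvg_shiftS.
under eq_fun do rewrite sq_shift.
by apply: continuous_cvg; [exact: gc | exact: IH].
Qed.

Definition xs (n : int) : E := lim (sq n @ \oo).

Lemma xs_sol n : xs (n + 1) = g n (xs n).
Proof.
rewrite /xs; apply: cvg_lim => //.
rewrite -cvg_shiftS.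
under eq_fun do rewrite sq_shift.
by apply: continuous_cvg; [exact: gc | exact: sq_cvg].
Qed.

Lemma xs_bound n : n <= n0 + 1 -> nu (xs n - c) <= d.
Proof.
move=> hn; apply/ler_addgt0Pr => e e0.
have e1 : 0 < e / c2 by rewrite divr_gt0.
have := @sq_cvg n; move/cvgrPdist_lt => /(_ _ e1) [N _ hN].
apply: le_trans (@nu_tri _ (sq n N) _) _.
rewrite addrC; apply: lerD; first exact: sq_inv.
apply: le_trans (nuc2 _) _.
rewrite mulrC -ler_pdivlMr //; apply: ltW; exact: (hN N (leqnn N)).
Qed.

Lemma sol_unique (x y : int -> E) :
  (forall n, x (n + 1) = g n (x n)) -> (forall n, y (n + 1) = g n (y n)) ->
  (forall n, n <= n0 -> nu (x n - c) <= R0) ->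
  (forall n, n <= n0 -> nu (y n - c) <= R0) -> x = y.
Proof.
move=> hx hy bx byy.
have key k : forall n, n <= n0 -> nu (x n - y n) <= q ^+ k * (R0 + R0).
  elim: k => [|k IH] n hn.
    rewrite expr0 mul1r; apply: le_trans (@nu_tri _ c _) _.
    by apply: lerD; [exact: bx | rewrite nu_sym; exact: byy].
  have -> : n = (n - 1) + 1 by ring.
  rewrite hx hy; apply: le_trans (contr _ _ _) _; first by lia.
  - by apply: bx; lia.
  - by apply: byy; lia.
  rewrite exprS -mulrA; apply: ler_wpM2l; first by case/andP: hq.
  by apply: IH; lia.
have eq_le n : n <= n0 -> x n = y n.
  move=> hn; apply/eqP; rewrite -subr_eq0 -normr_le0.
  apply: le_trans (nuK _) _; rewrite pmulr_rle0 //.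
  rewrite leNgt; apply/negP => pos.
  have [N hN] := geom_small (R0 + R0) hq pos.
  by have := key N n hn; rewrite mulrC => /le_lt_trans /(_ (hN N (leqnn N))); rewrite ltxx.
have eq_ge k : x (n0 + k%:Z) = y (n0 + k%:Z).
  elim: k => [|k IH]; first by rewrite addr0; apply: eq_le.
  have -> : n0 + k.+1%:Z = (n0 + k%:Z) + 1 by lia.
  by rewrite hx hy IH.
apply: funext => n; have [hn|hn] := lerP n n0; first exact: eq_le.
have -> : n = n0 + (absz (n - n0)%R)%:Z by rewrite gez0_abs; [ring | lia].
exact: eq_ge.
Qed.

Lemma pull_all :
  (forall n, xs (n + 1) = g n (xs n)) /\
  (forall n, n <= n0 -> nu (xs n - c) <= d) /\
  (forall x y : int -> E, (forall n, x (n + 1) = g n (x n)) ->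
     (forall n, y (n + 1) = g n (y n)) ->
     (forall n, n <= n0 -> nu (x n - c) <= R0) ->
     (forall n, n <= n0 -> nu (y n - c) <= R0) -> x = y).
Proof.
split; first exact: xs_sol.
split; last exact: sol_unique.
by move=> n hn; apply: xs_bound; lia.
Qed.

End Pull.
End F.

Unset Implicit Arguments. Set Strict Implicit. Set Printing Implicit Defensive.

Lemma enorm_ge (R : realType) l (v : 'rV[R]_l) : `|v| <= enorm v.
Proof.
apply: norm_le_entries; first exact: sqrtr_ge0.
move=> i j; rewrite (ord1 i) -sqrtr_sqr /enorm ler_sqrt; last first.
  by apply: sumr_ge0 => k _; exact: sqr_ge0.
exact: (@term_le_sum R _ (fun k => v ord0 k ^+ 2) j (fun k => sqr_ge0 _)).
Qed.

Lemma enorm_le (R : realType) l (v : 'rV[R]_l) : enorm v <= l%:R * `|v|.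
Proof.
have h0 : 0 <= l%:R * `|v| by rewrite mulr_ge0.
rewrite /enorm -[X in _ <= X]ger0_norm // -sqrtr_sqr ler_sqrt ?sqr_ge0 //.
apply: (@le_trans _ _ (\sum_(i < l) `|v| ^+ 2)).
  apply: ler_sum => i _.
  have h := entry_le_norm v ord0 i.
  rewrite -[v ord0 i ^+ 2]ger0_norm ?sqr_ge0 // normrX !expr2.
  by apply: ler_pM; rewrite ?normr_ge0.
rewrite sumr_const card_ord -[`|v| ^+ 2 *+ l]mulr_natl exprMn; apply: ler_wpM2r; first exact: sqr_ge0.
by rewrite -natrX ler_nat; nia.
Qed.

Lemma cont_slice (R : realType) l m (f : 'rV[R]_l * 'rV[R]_m -> 'rV[R]_l)
  (lam : 'rV[R]_m) : (forall p, differentiable f p) ->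
  continuous (fun x : 'rV[R]_l => f (x, lam)).
Proof.
move=> hf x; apply: differentiable_continuous.
apply: (@differentiable_comp _ _ _ _ (fun x : 'rV[R]_l => (x, lam)) f).
  by apply: differentiable_pair.
exact: hf.
Qed.

Theorem mainTheorem8 (R : realType) (l m : nat)
  (f : 'rV[R]_l * 'rV[R]_m -> 'rV[R]_l) (Lam : R -> 'rV[R]_m)
  (lam_m lam_p : 'rV[R]_m) (X : R -> 'rV[R]_l) (Xm Xp : 'rV[R]_l) :
  C1_prod f ->
  parameter_shift Lam lam_m lam_p ->
  stable_path f Lam lam_m lam_p X Xm Xp ->
  exists eps0 : R, 0 < eps0 /\
    forall eps : R, 0 < eps -> eps < eps0 ->
    exists S : R, 0 < S /\
      forall (r : R) (N : nat), 0 < r -> (0 < N)%N -> S < r * N%:R ->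
      exists! x : int -> 'rV[R]_l,
        is_solution f Lam r x /\
        (forall n : int, n <= - (N%:Z) -> enorm (x n - Xm) < eps).
Proof.
move=> hC hPS hSP.
have fix_m : f (Xm, lam_m) = Xm by case: hSP => _ [_ [_ [_ [h _]]]].
have spec : spectral_radius_lt1 (Dxf f Xm lam_m).
  by case: hSP => _ [_ [_ [_ [_ [_ [_ [h _]]]]]]].
have hLm : Lam s @[s --> -oo] --> lam_m by case: hPS.
set A := Dxf f Xm lam_m.
have [nu [k [c2 [K [[k0 k1 c20 K0] [nu_ge0 [nuD [nuN [nuc2 [nuK nuA]]]]]]]]]] :=
  adapted_norm spec.
set q := (1 + k) / 2.
have hq : 0 <= q < 1 by apply/andP; split; rewrite /q; lra.
set eta := (1 - k) / (2 * c2 * K).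
have eta0 : 0 < eta by rewrite divr_gt0 ?subr_gt0 // !mulr_gt0.
have [rho rho0 hrho] := diff_est Xm lam_m hC eta0.
set R0 := rho / (2 * K).
have R00 : 0 < R0 by rewrite divr_gt0 // mulr_gt0.
have KR0 : K * R0 < rho.
  have -> : K * R0 = rho / 2 by rewrite /R0; field; rewrite gt_eqF.
  lra.
have near_rho v : nu v <= R0 -> `|v| < rho.
  move=> h; apply: le_lt_trans (nuK v) _; apply: le_lt_trans KR0.
  by apply: ler_wpM2l => //; exact: ltW.
have contr0 lam : `|lam - lam_m| < rho -> forall x y, nu (x - Xm) <= R0 ->
    nu (y - Xm) <= R0 -> nu (f (x, lam) - f (y, lam)) <= q * nu (x - y).
  move=> hl x y hx hy.
  have E := hrho x y lam (near_rho _ hx) (near_rho _ hy) hl.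
  have -> : f (x, lam) - f (y, lam) =
      (x - y) *m A^T + (f (x, lam) - f (y, lam) - (x - y) *m A^T).
    by rewrite addrCA subrr addr0.
  apply: le_trans (nuD _ _) _.
  apply: le_trans (lerD (nuA (x - y)) (nuc2 _)) _.
  apply: le_trans (lerD (lexx _) (ler_wpM2l (ltW c20) E)) _.
  have h2 := nuK (x - y).
  have H : c2 * (eta * `|x - y|) <= (1 - k) / 2 * nu (x - y).
    have -> : c2 * (eta * `|x - y|) = (1 - k) / 2 * (`|x - y| / K).
      by rewrite /eta; field; rewrite !gt_eqF.
    apply: ler_wpM2l; first lra.
    by rewrite ler_pdivrMr // mulrC.
  have -> : q * nu (x - y) = k * nu (x - y) + (1 - k) / 2 * nu (x - y).
    by rewrite /q; field.
  by apply: lerD.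
exists (R0 / c2); split; first by rewrite divr_gt0.
move=> eps eps0 epsR.
have nu0 : nu 0 = 0.
  apply/eqP; rewrite eq_le nu_ge0 andbT.
  by apply: le_trans (nuc2 0) _; rewrite normr0 mulr0.
set d := Num.min R0 (eps / (2 * K * (l.+1)%:R)).
have d0 : 0 < d by rewrite lt_min R00 /= divr_gt0 // !mulr_gt0 // ltr0n.
have dR : d <= R0 by rewrite ge_min lexx.
have dK : K * d <= eps / (2 * (l.+1)%:R).
  have h : d <= eps / (2 * K * (l.+1)%:R) by rewrite ge_min lexx orbT.
  apply: le_trans (ler_wpM2l (ltW K0) h) _.
  rewrite le_eqVlt; apply/orP; left; apply/eqP; field.
  by rewrite !gt_eqF // ltr0n.
have q1 : 0 < 1 - q by case/andP: hq => _ ?; rewrite subr_gt0.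
have e1 : 0 < (1 - q) * d / c2 by rewrite divr_gt0 // mulr_gt0.
have fcont : {for (Xm, lam_m), continuous f} := differentiable_continuous (hC.1 _).
have /nbhs_ballP [tau tau0 htau] :
    \forall p \near (Xm, lam_m), `|f (Xm, lam_m) - f p| < (1 - q) * d / c2.
  by move/cvgrPdist_lt: fcont; apply.
have mt0 : 0 < Num.min rho tau by rewrite lt_min rho0 tau0.
have [M [hMr hM]] : \forall s \near -oo, `|lam_m - Lam s| < Num.min rho tau.
  by move/cvgrPdist_lt: hLm; apply.
set S := Num.max 1 (- M).
exists S; split; first by rewrite lt_max ltr01.
move=> r N r0 N0 hS.
pose g := fun (n : int) (x : 'rV[R]_l) => f (x, Lam (r * n%:~R)).
have hlam n : n <= - (N%:Z) ->
    `|Lam (r * n%:~R) - lam_m| < rho /\ `|Lam (r * n%:~R) - lam_m| < tau.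
  move=> hn.
  have h1 : (n%:~R : R) <= - (N%:R).
    have : (n%:~R : R) <= (- (N%:Z))%:~R by rewrite ler_int.
    by rewrite mulrNz.
  have h2 : r * n%:~R < M.
    apply: le_lt_trans (_ : r * n%:~R <= - (r * N%:R)) _.
      by rewrite -mulrN; apply: ler_wpM2l => //; exact: ltW.
    have : - M <= S by rewrite le_max lexx orbT.
    lra.
  have := hM _ h2; rewrite lt_min distrC => /andP[? ?]; by split.
have contr n : n <= - (N%:Z) -> forall x y, nu (x - Xm) <= R0 ->
    nu (y - Xm) <= R0 -> nu (g n x - g n y) <= q * nu (x - y).
  by move=> hn; apply: contr0; case: (hlam n hn).
have inv n : n <= - (N%:Z) -> forall x, nu (x - Xm) <= d -> nu (g n x - Xm) <= d.
  move=> hn x hx; have [hl1 hl2] := hlam n hn.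
  rewrite /g; set lam := Lam (r * n%:~R).
  have -> : f (x, lam) - Xm = (f (x, lam) - f (Xm, lam)) + (f (Xm, lam) - Xm).
    by rewrite addrA subrK.
  apply: le_trans (nuD _ _) _.
  have h1 : nu (f (x, lam) - f (Xm, lam)) <= q * d.
    apply: le_trans (contr0 lam hl1 x Xm (le_trans hx dR) _) _.
      by rewrite subrr nu0 ltW.
    by apply: ler_wpM2l => //; case/andP: hq.
  have h2 : nu (f (Xm, lam) - Xm) <= (1 - q) * d.
    apply: le_trans (nuc2 _) _.
    have hb : ball (Xm, lam_m) tau (Xm, lam).
      by split; rewrite -ball_normE /= ?subrr ?normr0 // distrC.
    have := htau _ hb; rewrite /= fix_m distrC => h.
    by rewrite mulrC -ler_pdivlMr //; exact: ltW.
  lra.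
have gc n : continuous (g n) by exact: cont_slice hC.1.
have [hsol [hbound huniq]] :=
  pull_all hq K0 c20 nuK nuc2 nuD nuN (ltW d0) dR contr inv gc.
exists (xs g Xm); split.
  split; first by move=> n; exact: hsol.
  move=> n hn; have hb := hbound n hn.
  apply: le_lt_trans (@enorm_le _ _ _) _.
  apply: (@le_lt_trans _ _ (l%:R * (K * d))).
    apply: ler_wpM2l => //; apply: le_trans (nuK _) _.
    by apply: ler_wpM2l => //; exact: ltW.
  apply: (@le_lt_trans _ _ (l%:R * (eps / (2 * (l.+1)%:R)))).
    by apply: ler_wpM2l.
  have hl1 : (l%:R : R) < (l.+1)%:R by rewrite ltr_nat.
  have hl0 : (0 : R) <= l%:R by exact: ler0n.
  have hl : (l%:R : R) < 2 * (l.+1)%:R by lra.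
  have D0 : (0 : R) < 2 * (l.+1)%:R by lra.
  by rewrite mulrA ltr_pdivrMr // mulrC ltr_pM2l.
move=> y [hy hyb]; apply: huniq.
- exact: hsol.
- exact: hy.
- by move=> n hn; apply: le_trans (hbound n hn) dR.
- move=> n hn; apply: ltW; apply: le_lt_trans (nuc2 _) _.
  have he := hyb n hn.
  apply: (@le_lt_trans _ _ (c2 * eps)).
    apply: ler_wpM2l; first exact: ltW.
    by apply: ltW; apply: le_lt_trans (@enorm_ge _ _ _) he.
  by rewrite mulrC -ltr_pdivlMr.
Qed.
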